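(* Consider an execution $\gamma_0\gamma_1\ldots$ of the unison dynamics with $\gamma_0$ satisfying $WU_0$, and let $\bot_0$, $\widetilde{p^t.r}$, $t_{p,k}$ be as in the context. Let $k\ge\bot_0+D$ be an integer and let $(p,t)$ be an event such that $t_{p,k}$ is defined and $t\ge t_{p,k}$. Then $V\big(p,\widetilde{p^t.r}-k\big)\subseteq Cover(p,t)$.
   Context: Let $G=(V,E)$ be a finite connected undirected graph, $|V|=n\ge 2$, $\mathcal N_p$ the set of neighbors of $p$, $d(p,q)$ the hop distance, $D$ the diameter, and $V(p,r)=\{q\in V: d(p,q)\le r\}$. Fix an integer $M\ge 3$; for an integer $a$, $\bar a\in\{0,\dots,M-1\}$ denotes its residue modulo $M$. Each process $p$ holds a clock $p.r\in\{0,\dots,M-1\}$; $p^t.r$ denotes its value in configuration $\gamma_t$. Integers $a,b$ are locally comparable if $\min(\overline{a-b},\overline{b-a})\le 1$, and then $b\ominus a=\overline{b-a}$ if $\overline{b-a}\le 1$, and $b\ominus a=-\overline{a-b}$ otherwise. A configuration satisfies $WU$ if for every edge $\{p,q\}$, $p.r$ and $q.r$ are locally comparable. The delay of a path $\mu=p_0p_1\ldots p_k$ is $\delta_\mu=\sum_{i=0}^{k-1}(p_{i+1}.r\ominus p_i.r)$ ($0$ if $k=0$). A configuration satisfies $WU_0$ if it satisfies $WU$ and the delay is intrinsic: for all $p,q$, all paths from $p$ to $q$ have the same delay, denoted $\delta_{(p,q)}$ ($\delta^t_{(p,q)}$ in $\gamma_t$). Dynamics: a process $p$ is enabled iff for every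 $q\in\mathcal N_p$, $q.r=p.r$ or $q.r=\overline{p.r+1}$. In a transition $\gamma_t\to\gamma_{t+1}$ a nonempty set of processes enabled in $\gamma_t$ is chosen (by an arbitrary, possibly unfair, daemon) and each of them sets $p.r:=\overline{p.r+1}$; other clocks are unchanged. Events: $(p,0)$ is an event for every $p$; $(p,t+1)$ is an event iff $p$ increments in $\gamma_t\to\gamma_{t+1}$. Causal relation $\leadsto$: for an event $(p,t)$ with $t>0$, $(p,t')\leadsto(p,t)$ where $t'$ is the largest time $<t$ such that $(p,t')$ is an event, and for each $q\in\mathcal N_p$, $(q,t')\leadsto(p,t)$ where $t'$ is the largest time $<t$ such that $(q,t')$ is an event. $\preceq$ is the reflexive–transitive closure of $\leadsto$. $Cover(p,t)$ is the set of processes $q$ such that some event $(q,t')$ satisfies $(q,t')\preceq(p,t)$. Lifting: assume $\gamma_0$ satisfies $WU_0$. Choose $p_0$ with $\delta^0_{(p_0,q)}\ge 0$ for all $q\in V$, and let $\bot_0=p_0^0.r$. Define integers $\widetilde{p^t.r}$ by $\widetilde{p^0.r}=\bot_0+\delta^0_{(p_0,p)}$, and $\widetilde{p^{t+1}.r}=\widetilde{p^t.r}+1$ if $p$ increments in $\gamma_t\to\gamma_{t+1}$, $\widetilde{p^{t+1}.r}=\widetilde{p^t.r}$ otherwise. For an integer $k$, $t_{p,k}$ is the smallest $t$ with $\widetilde{p^t.r}=k$. *)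

(* Defs.v *)
From HB Require Import structures.
From mathcomp Require Import all_boot all_order all_algebra.
From Stdlib Require Import Relations.
Set Implicit Arguments. Unset Strict Implicit. Unset Printing Implicit Defensive.
Import Order.TTheory GRing.Theory Num.Theory.

Section Unison.
Variables (T : finType) (e : rel T) (M : nat).

(* A configuration assigns a clock in {0,..,M-1} (encoded as nat) to each process. *)
Definition config := T -> nat.

Definition modsub (a b : nat) : nat := (a + M - b) %% M.

Definition loc_comparable (a b : nat) : bool := minn (modsub a b) (modsub b a) <= 1.

Definition ominus (b a : nat) : int :=
  if modsub b a <= 1 then Posz (modsub b a) else (- Posz (modsub a b))%R.

Fixpoint delay (c : config) (p : T) (s : seq T) : int :=
  match s with
  | [::] => 0
  | q :: s' => (ominus (c q) (c p) + delay c q s')%R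
  end.

Definition WU (c : config) : Prop := forall p q, e p q -> loc_comparable (c p) (c q).

Definition WU0 (c : config) : Prop :=
  WU c /\
  forall p (s1 s2 : seq T), path e p s1 -> path e p s2 -> last p s1 = last p s2 ->
    delay c p s1 = delay c p s2.

Definition enabled (c : config) (p : T) : Prop :=
  forall q, e p q -> c q = c p \/ c q = (c p).+1 %% M.

Definition step (c c' : config) : Prop :=
  exists S : {set T}, S != set0 /\ (forall p, p \in S -> enabled c p) /\
    forall p, c' p = if p \in S then (c p).+1 %% M else c p.

Definition execution (gamma : nat -> config) : Prop :=
  forall t, step (gamma t) (gamma t.+1).

Definition incr (gamma : nat -> config) (t : nat) (p : T) : bool :=
  gamma t.+1 p != gamma t p.

Definition is_event (gamma : nat -> config) (p : T) (t : nat) : Prop :=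
  t = 0 \/ exists t', t = t'.+1 /\ incr gamma t' p.

Definition causal (gamma : nat -> config) (x y : T * nat) : Prop :=
  let: (q, t') := x in let: (p, t) := y in
  0 < t /\ is_event gamma p t /\ (q = p \/ e p q) /\
  is_event gamma q t' /\ t' < t /\
  (forall t'', t' < t'' -> t'' < t -> ~ is_event gamma q t'').

Definition causal_le (gamma : nat -> config) : relation (T * nat) :=
  clos_refl_trans (T * nat) (causal gamma).

Definition Cover (gamma : nat -> config) (p : T) (t : nat) (q : T) : Prop :=
  exists t', is_event gamma q t' /\ causal_le gamma (q, t') (p, t).

Definition nincr (gamma : nat -> config) (p : T) (t : nat) : nat :=
  \sum_(i < t) incr gamma i p.

(* lifted clock: widetilde{p^t.r} = bot0 + delta^0_(p0,p) + #increments,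
   where dl p stands for delta^0_(p0,p) *)
Definition lifted (gamma : nat -> config) (p0 : T) (dl : T -> int) (p : T) (t : nat) : int :=
  (Posz (gamma 0%N p0) + dl p + Posz (nincr gamma p t))%R.

Definition walk_le (p q : T) (r : nat) : Prop :=
  exists s : seq T, path e p s /\ last p s = q /\ size s <= r.

Definition is_diameter (D : nat) : Prop :=
  (forall p q, walk_le p q D) /\ (exists p q, forall r, walk_le p q r -> D <= r).

End Unison.

(* Main.v *)
Require Import Defs.
From HB Require Import structures.
From mathcomp Require Import all_boot all_order all_algebra.
From Stdlib Require Import Relation_Operators.
Import Order.TTheory GRing.Theory Num.Theory.

Section H.
Variables (T : finType) (e : rel T) (M : nat) (gamma : nat -> config T).
Variables (p0 : T) (dl : T -> int).
Hypothesis esymm : symmetric e.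
Hypothesis M3 : 3 <= M.
Hypothesis exe : execution e M gamma.
Hypothesis Hlt0 : forall x, gamma 0 x < M.
Hypothesis Hdl : forall x (s : seq T), path e p0 s -> last p0 s = x -> dl x = delay M (gamma 0) p0 s.
Hypothesis Hdl0 : forall x, (0 <= dl x)%R.
Hypothesis Hconn : forall x y, exists s : seq T, path e x s /\ last x s = y.

Definition Ln x s := gamma 0 p0 + `|dl x|%N + nincr gamma x s.

Lemma LnS x s : Ln x s.+1 = Ln x s + incr gamma s x.
Proof. by rewrite /Ln /nincr big_ord_recr addnA. Qed.

Lemma Ln0 x : Ln x 0 = gamma 0 p0 + `|dl x|%N.
Proof. by rewrite /Ln /nincr big_ord0 addn0. Qed.

Lemma incr_step {s x} : incr gamma s x -> enabled e M (gamma s) x /\ gamma s.+1 x = (gamma s x).+1 %% M.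
Proof.
case: (exe s) => S [_ [HS Hg]]. rewrite /incr Hg.
case: (boolP (x \in S)) => hx; last by rewrite eqxx.
by move=> _; split => //; apply HS.
Qed.

Lemma noincr s x : ~~ incr gamma s x -> gamma s.+1 x = gamma s x.
Proof. by rewrite /incr negbK => /eqP. Qed.

Lemma mod_neq a n : 0 < n -> n < M -> a %% M <> (a + n) %% M.
Proof.
move=> n0 nM H. have: (a + 0 == a + n %[mod M]) by rewrite addn0 H.
rewrite eqn_modDl mod0n modn_small // => /eqP H0. by rewrite -H0 in n0.
Qed.

Definition Inv s := (forall x, gamma s x = Ln x s %% M) /\
  (forall x y, e x y -> Ln y s <= (Ln x s).+1).

Lemma enabled_ge {s x y} : Inv s -> enabled e M (gamma s) x -> e x y -> Ln x s <= Ln y s.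
Proof.
move=> [Hg He] Hen exy.
have := He y x; rewrite esymm exy => /(_ isT).
rewrite leq_eqVlt ltnS => /orP[/eqP Hx|//].
exfalso. case: (Hen y exy); rewrite !Hg Hx.
- move=> H; apply: (@mod_neq (Ln y s) 1) => //; first by apply: leq_trans M3.
  by rewrite addn1.
- rewrite -addn1 modnDml addn1 => H; apply: (@mod_neq (Ln y s) 2) => //.
  by rewrite addn2.
Qed.

Lemma Inv_step s : Inv s -> Inv s.+1.
Proof.
move=> I. have [Hg He] := I. split.
- move=> x. rewrite LnS. case: (boolP (incr gamma s x)) => hi.
  + have [_ ->] := incr_step hi. by rewrite Hg -addn1 modnDml.
  + by rewrite noincr // Hg addn0.
- move=> x y exy. rewrite !LnS.
  case: (boolP (incr gamma s y)) => hy; case: (boolP (incr gamma s x)) => hx /=.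
  + by rewrite !addn1 ltnS He.
  + rewrite addn0 addn1 ltnS. apply: (enabled_ge I (incr_step hy).1). by rewrite esymm.
  + by rewrite addn0 addn1 ltnW // ltnS He.
  + by rewrite !addn0 He.
Qed.

Lemma delay_rcons (c : config T) (p : T) s y :
  delay M c p (rcons s y) = (delay M c p s + ominus M (c y) (c (last p s)))%R.
Proof.
elim: s p => [|q s IH] p /=; first by rewrite addr0 add0r.
by rewrite IH addrA.
Qed.

Lemma ominus_le1 a b : (ominus M a b <= 1)%R.
Proof.
rewrite /ominus; case: ifP => h; first by rewrite lez_nat.
by apply: le_trans (_ : 0 <= 1)%R => //; rewrite oppr_le0.
Qed.

Lemma delay_le (c : config T) (p : T) s : (delay M c p s <= Posz (size s))%R.
Proof.
elim: s p => [|q s IH] p //=.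
by rewrite intS lerD // ominus_le1.
Qed.

Lemma nonneg x : exists a, dl x = Posz a.
Proof. by case: (dl x) (Hdl0 x) => // a _; exists a. Qed.

Lemma base_mod s : path e p0 s -> gamma 0 (last p0 s) = (gamma 0 p0 + `|dl (last p0 s)|%N) %% M.
Proof.
elim/last_ind: s => [|s y IH].
- move=> _ /=. have -> : dl p0 = 0%R by rewrite (Hdl p0 [::]). by rewrite addn0 modn_small.
- rewrite rcons_path => /andP[ps exy]. rewrite last_rcons.
  set x := last p0 s in exy *.
  have hy : dl y = (dl x + ominus M (gamma 0 y) (gamma 0 x))%R.
    rewrite (Hdl y (rcons s y)) ?rcons_path ?ps ?exy ?last_rcons //.
    by rewrite delay_rcons -(Hdl _ _ ps erefl).
  have IHx := IH ps.
  have [a Ha] := nonneg x. have [b Hb] := nonneg y.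
  rewrite Ha /= in IHx. rewrite Hb /=. rewrite Ha Hb in hy.
  have cxM : gamma 0 x <= gamma 0 y + M by apply: leq_trans (ltnW (Hlt0 x)) (leq_addl _ _).
  have cyM : gamma 0 y <= gamma 0 x + M by apply: leq_trans (ltnW (Hlt0 y)) (leq_addl _ _).
  move: hy; rewrite /ominus /modsub. case: ifP => _ hy.
  + rewrite -PoszD in hy. case: hy => ->.
    rewrite addnA -modnDml -IHx modnDmr subnKC // modnDr modn_small //.
  + move/(congr1 (fun z => z + Posz ((gamma 0 x + M - gamma 0 y) %% M))%R): hy.
    rewrite subrK -PoszD => -[] hab. rewrite -hab addnA modnDmr in IHx.
    have H1 : (gamma 0 y + gamma 0 x == gamma 0 p0 + b + gamma 0 x %[mod M]).
      apply/eqP. rewrite {1}IHx modnDmr addnCA subnKC // addnA modnDr //.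
    rewrite eqn_modDr modn_small // in H1. exact/eqP.
Qed.

Lemma base_le x y : e x y -> Ln y 0 <= (Ln x 0).+1.
Proof.
move=> exy. have [s [ps lx]] := Hconn p0 x.
have hy : dl y = (dl x + ominus M (gamma 0 y) (gamma 0 x))%R.
  rewrite (Hdl y (rcons s y)) ?rcons_path ?ps ?lx ?exy ?last_rcons //.
  by rewrite delay_rcons -(Hdl _ _ ps lx) lx.
have [a Ha] := nonneg x. have [b Hb] := nonneg y.
rewrite !Ln0 Ha Hb /= -addnS leq_add2l.
rewrite Ha Hb in hy.
have : (Posz b <= Posz a + 1)%R by rewrite hy lerD // ominus_le1.
by rewrite -PoszD lez_nat addn1.
Qed.

Lemma Inv_all s : Inv s.
Proof.
elim: s => [|s IH]; last exact: Inv_step.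
split; last exact: base_le.
move=> x. have [s [ps lx]] := Hconn p0 x. rewrite Ln0 -lx. exact: base_mod.
Qed.

Lemma last_event x n : exists t1, t1 <= n /\ is_event gamma x t1 /\
  forall t'', t1 < t'' -> t'' <= n -> ~ is_event gamma x t''.
Proof.
elim: n => [|n [t1 [h1 [h2 h3]]]].
- exists 0; split => //; split; first by left.
  by move=> t'' a b; move: (leq_ltn_trans b a); rewrite ltnn.
- case: (boolP (incr gamma n x)) => hi.
  + exists n.+1; split => //; split; first by right; exists n.
    by move=> t'' a b; move: (leq_ltn_trans b a); rewrite ltnn.
  + exists t1; split; first by apply: leq_trans h1 _.
    split => // t'' a b. case: (ltngtP t'' n.+1) => c.
    * by apply: h3.
    * by move: (leq_ltn_trans b c); rewrite ltnn.
    * rewrite c => -[//|[t' [[<-] h]]]. by move: hi; rewrite h.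
Qed.

Lemma Ln_const x t1 d : (forall i, t1 <= i -> i < t1 + d -> ~~ incr gamma i x) ->
  Ln x (t1 + d) = Ln x t1.
Proof.
elim: d => [|d IH] H; first by rewrite addn0.
rewrite addnS LnS IH; last by move=> i a b; apply: H => //; rewrite addnS ltnW.
have h : ~~ incr gamma (t1 + d) x by apply: H; rewrite ?leq_addr // addnS.
by rewrite (negbTE h) addn0.
Qed.

Variable kn : nat.
Hypothesis Hk0 : forall x, Ln x 0 <= kn.

Lemma mainL t : forall p q s, is_event gamma p t -> path e p s -> last p s = q ->
  size s + kn <= Ln p t -> Cover e gamma p t q.
Proof.
elim/ltn_ind: t => t IH p q s ev ps lq hs.
case: s ps lq hs => [|p1 s'] /= ps lq hs.
- rewrite -lq. exists t. split => //; apply rt_refl.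
- move/andP: ps => [ep1 ps'].
  case: t IH ev hs => [|t0] IH ev hs.
  + have := leq_trans hs (Hk0 p). by rewrite addSn ltnNge leq_addl.
  + have hi : incr gamma t0 p by case: ev => [//|[t' [[<-] h]]].
    have [en _] := incr_step hi.
    have [t1 [ht1 [ev1 nev]]] := last_event p1 t0.
    have Lc : Ln p1 t0 = Ln p1 t1.
      have := @Ln_const p1 t1 (t0 - t1). rewrite subnKC //. apply => i hi1 hi2.
      apply/negP => hinc. apply: (nev i.+1) => //. by right; exists i.
    have ge := enabled_ge (Inv_all t0) en ep1.
    have hs1 : size s' + kn <= Ln p1 t1.
      rewrite -Lc. apply: leq_trans ge. move: hs. by rewrite LnS hi addn1 addSn ltnS.
    have [t' [evq cl]] := IH t1 (leq_ltn_trans ht1 (ltnSn _)) p1 q s' ev1 ps' lq hs1.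
    exists t'; split => //. apply: rt_trans cl _. apply: rt_step.
    split; [done|split; [done|split; [by right|split; [done|split; [by rewrite ltnS|]]]]].
    by move=> t'' a b; apply: nev.
Qed.

End H.

Theorem lemma3 (T : finType) (e : rel T) (M : nat) (D : nat)
  (gamma : nat -> config T) (p0 : T) (dl : T -> int) (k : int) (p : T) (t : nat) :
  (* graph: finite, connected, undirected, simple, n >= 2 *)
  1 < #|T| ->
  symmetric e -> irreflexive e ->
  (forall x y, exists s : seq T, path e x s /\ last x s = y) ->
  is_diameter e D ->
  (* clocks *)
  3 <= M ->
  (forall x, gamma 0 x < M) ->
  execution e M gamma ->
  WU0 e M (gamma 0) ->
  (* dl x = delta^0_(p0,x) (intrinsic delay), and p0 has all delays >= 0 *)
  (forall x (s : seq T), path e p0 s -> last p0 s = x -> dl x = delay M (gamma 0) p0 s) ->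
  (forall x, (0 <= dl x)%R) ->
  (* k >= bot0 + D *)
  (Posz (gamma 0%N p0) + Posz D <= k)%R ->
  is_event gamma p t ->
  (* t_{p,k} is defined and t >= t_{p,k} *)
  (exists tpk, lifted gamma p0 dl p tpk = k /\
     (forall t', lifted gamma p0 dl p t' = k -> tpk <= t') /\ tpk <= t) ->
  forall q, (exists s : seq T, path e p s /\ last p s = q /\
                 (Posz (size s) <= lifted gamma p0 dl p t - k)%R) ->
  Cover e gamma p t q.
Proof.
move=> _ esymm _ Hconn [HD _] M3 Hlt0 exe _ Hdl Hdl0 Hk ev _ q [s [ps [lq hs]]].
have [kn Hkn] : exists kn, k = Posz kn.
  exists `|k|%N. rewrite gez0_abs //. apply: le_trans Hk. by rewrite -PoszD.
have Hlift : forall x t, lifted gamma p0 dl x t = Posz (Ln T gamma p0 dl x t).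
  move=> x t0. rewrite /lifted /Ln. have [a Ha] := @nonneg _ _ Hdl0 x. by rewrite Ha -!PoszD.
rewrite Hkn in Hk. rewrite Hkn Hlift lerBrDr -PoszD lez_nat in hs.
apply: (@mainL _ _ _ _ _ _ esymm M3 exe Hlt0 Hdl Hdl0 Hconn _ _ _ _ _ _ ev ps lq hs).
move=> x. rewrite Ln0.
have [s1 [ps1 [lx1 sz]]] := HD p0 x.
have := delay_le _ M (gamma 0) p0 s1. rewrite -(Hdl x s1 ps1 lx1).
have [a Ha] := @nonneg _ _ Hdl0 x. rewrite Ha /= lez_nat => ha.
rewrite -PoszD lez_nat in Hk. apply: leq_trans Hk. rewrite leq_add2l.
exact: leq_trans ha sz.
Qed.
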